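(* Let $K\in\mathbb R$ and let $Q$ be a polynomial of the form $$Q(z)=-\frac14z^4+\frac K2z^2+iz+C$$ for some constant $C$, which can also be written as $$Q(z)=-\frac14(z-z_1)(z-z_2)(z-z_0)^2,\qquad z_0=-ai,\quad z_1=-b+ci,\quad z_2=b+ci,$$ with real parameters $a,b,c$ and $b>0$. Then $b$ is the unique positive real root of $b^6-2Kb^4-8=0$, the parameters $a$ and $c$ satisfy $a=c=\frac{2}{b^2}$, and $C=-\frac{b^6+4}{b^8}$. *)

(* Defs.v *)
(* R is an arbitrary real closed field (e.g. the reals), R[i] its complexification. *)
From mathcomp Require Import all_boot all_order all_algebra.
From mathcomp Require Export complex.
Set Implicit Arguments. Unset Strict Implicit. Unset Printing Implicit Defensive.
Import Order.TTheory GRing.Theory Num.Theory.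
Local Open Scope ring_scope.
Local Open Scope complex_scope.

Definition Qpoly (R : rcfType) (K : R) (C : R[i]) (z : R[i]) : R[i] :=
  - (4%:R)^-1 * z ^+ 4 + (K / 2%:R)%:C * z ^+ 2 + 'i * z + C.

Definition Qfact (R : rcfType) (a b c : R) (z : R[i]) : R[i] :=
  - (4%:R)^-1 * (z - Complex (- b) c) * (z - Complex b c) * (z - Complex 0 (- a)) ^+ 2.

(* Main.v *)
Require Import Defs.
From mathcomp Require Import all_boot all_order all_algebra.
From mathcomp Require Import complex ring lra.
Import Order.TTheory GRing.Theory Num.Theory.
Local Open Scope ring_scope.
Local Open Scope complex_scope.

Lemma eqs (R : rcfType) (K : R) (C1 C2 : R) (a b c x : R) :
  Qpoly K (Complex C1 C2) (Complex x 0) = Qfact a b c (Complex x 0) ->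
  - (4^-1 * (x * (x * (x * x)))) + K / 2 * (x * x) + C1 =
  (- (4^-1 * (x + b) * (x - b)) + 4^-1 * c * c) * (x * x - a * a) -
  (4^-1 * (x + b) * c + 4^-1 * c * (x - b)) * (x * a + a * x) /\
  x + C2 =
  (- (4^-1 * (x + b) * (x - b)) + 4^-1 * c * c) * (x * a + a * x) +
  (4^-1 * (x + b) * c + 4^-1 * c * (x - b)) * (x * x - a * a).
Proof.
have h4 : (4%:R : R[i])^-1 = (4%:R^-1 : R)%:C by rewrite rmorphV ?rmorph_nat // unitfE pnatr_eq0.
rewrite /Qpoly /Qfact h4 !exprS expr0 /real_complex_def.
by simpc; case.
Qed.

Lemma coef (R : rcfType) (K : R) (C1 C2 : R) (a b c : R)
  (hQ : forall z : R[i], Qpoly K (Complex C1 C2) z = Qfact a b c z) :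
  [/\ C2 = 0, c = a, a * b^+2 = 2, K = (b^+2 - 2 * a^+2)/2 & C1 = - (b^+2 + c^+2) * a^+2 / 4].
Proof.
have [R0 I0] := eqs _ _ _ _ _ _ _ _ (hQ (Complex 0 0)).
have [R1 I1] := eqs _ _ _ _ _ _ _ _ (hQ (Complex 1 0)).
have [R2 I2] := eqs _ _ _ _ _ _ _ _ (hQ (Complex (-1) 0)).
have [R3 I3] := eqs _ _ _ _ _ _ _ _ (hQ (Complex 2 0)).
have [R4 I4] := eqs _ _ _ _ _ _ _ _ (hQ (Complex (-2) 0)).
have hc : c = a by lra.
subst c.
have hab : a * b^+2 = 2 by nra.
split => //; nra.
Qed.

Theorem lemma3p1 (R : rcfType) (K : R) (C : R[i]) (a b c : R)
  (hb : 0 < b)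
  (hQ : forall z : R[i], Qpoly K C z = Qfact a b c z) :
  [/\ b ^+ 6 - 2%:R * K * b ^+ 4 - 8%:R = 0,
      (forall x : R, 0 < x -> x ^+ 6 - 2%:R * K * x ^+ 4 - 8%:R = 0 -> x = b),
      a = 2%:R / b ^+ 2,
      c = 2%:R / b ^+ 2 &
      C = (- ((b ^+ 6 + 4%:R) / b ^+ 8))%:C].
Proof.
case: C hQ => C1 C2 hQ.
have [-> hc hab hK hC] := coef _ _ _ _ _ _ _ hQ.
subst c.
have b2 : b ^+ 2 != 0 by rewrite expf_neq0 // gt_eqF.
have ha : a = 2%:R / b ^+ 2 by rewrite -hab mulfK.
have hb6 : b ^+ 6 - 2%:R * K * b ^+ 4 - 8%:R = 0.
  rewrite hK ha; field; by rewrite gt_eqF.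
split => //.
- move=> x hx hx6.
  have : (x ^+ 2 - b ^+ 2) * (x ^+ 4 * b ^+ 4 + 8%:R * (x ^+ 2 + b ^+ 2)) = 0.
    have e1 : 2%:R * K = x ^+ 2 - 8%:R / x ^+ 4.
      apply: (mulIf (_ : x ^+ 4 != 0)); first by rewrite expf_neq0 // gt_eqF.
      rewrite mulrBl mulfVK ?expf_neq0 ?gt_eqF //. lra.
    have e2 : 2%:R * K = b ^+ 2 - 8%:R / b ^+ 4.
      apply: (mulIf (_ : b ^+ 4 != 0)); first by rewrite expf_neq0 // gt_eqF.
      rewrite mulrBl mulfVK ?expf_neq0 ?gt_eqF //. lra.
    have e3 : x ^+ 2 - 8%:R / x ^+ 4 = b ^+ 2 - 8%:R / b ^+ 4 by rewrite -e1 -e2.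
    move/eqP: e3; rewrite -subr_eq0 => /eqP e3.
    have -> : (x ^+ 2 - b ^+ 2) * (x ^+ 4 * b ^+ 4 + 8%:R * (x ^+ 2 + b ^+ 2))
      = (x ^+ 2 - 8%:R / x ^+ 4 - (b ^+ 2 - 8%:R / b ^+ 4)) * (x ^+ 4 * b ^+ 4).
      by field; rewrite ?(gt_eqF hx, gt_eqF hb).
    by rewrite e3 mul0r.
  move/eqP; rewrite mulf_eq0 => /orP [|].
    rewrite subr_eq0 => /eqP e. nra.
  move/eqP => e; have : 0 < x ^+ 4 * b ^+ 4 + 8%:R * (x ^+ 2 + b ^+ 2) by
    apply: addr_gt0; [apply: mulr_gt0; apply: exprn_gt0 | apply: mulr_gt0; [by [] | apply: addr_gt0; apply: exprn_gt0]].
  by rewrite e ltxx.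
- rewrite hC ha /real_complex_def; apply: f_equal2 => //; field; by rewrite gt_eqF.
Qed.
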